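(* If $a$ is an integral algebraic element of a ring $K$, then the monogenic ring $\mathbb{Z}\langle a\rangle$ is finitely separable.
   Context: Rings are associative and not necessarily unital. $a\in K$ is integral algebraic if $f(a)=0$ for some monic $f\in\mathbb{Z}[x]$ with $f(0)=0$. $\mathbb{Z}\langle a\rangle=\{g(a): g\in\mathbb{Z}[x],\ g(0)=0\}$ is the subring generated by $a$. A ring $R$ is finitely separable if for every $r\in R$ and every subring $A\subseteq R$ with $r\notin A$ there exist a finite ring $F$ and a homomorphism $\varphi:R\to F$ with $\varphi(r)\notin\varphi(A)$. *)

(* Defs.v *)
From HB Require Import structures.
From mathcomp Require Import all_boot all_order all_algebra.
Set Implicit Arguments. Unset Strict Implicit. Unset Printing Implicit Defensive.
Import GRing.Theory.
Local Open Scope ring_scope.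

Definition is_rng (V : zmodType) (mul : V -> V -> V) : Prop :=
  associative mul /\ left_distributive mul +%R /\ right_distributive mul +%R.

(* rpow mul a n = a^(n+1) (positive powers only, no unit needed) *)
Definition rpow (V : zmodType) (mul : V -> V -> V) (a : V) (n : nat) : V :=
  iter n (mul a) a.

(* g(a) for g in Z[x] with g(0) = 0: sum_{i >= 1} g_i a^i (constant term ignored) *)
Definition peval (V : zmodType) (mul : V -> V -> V) (g : {poly int}) (a : V) : V :=
  \sum_(1 <= i < size g) (rpow mul a i.-1) *~ g`_i.

Definition int_algebraic (V : zmodType) (mul : V -> V -> V) (a : V) : Prop :=
  exists f : {poly int}, f \is monic /\ f`_0 = 0 /\ peval mul f a = 0.

Definition Zmono (V : zmodType) (mul : V -> V -> V) (a : V) : V -> Prop :=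
  fun x => exists g : {poly int}, g`_0 = 0 /\ x = peval mul g a.

Definition is_subring (V : zmodType) (mul : V -> V -> V) (R A : V -> Prop) : Prop :=
  (forall x, A x -> R x) /\ A 0 /\
  (forall x y, A x -> A y -> A (x - y)) /\
  (forall x y, A x -> A y -> A (mul x y)).

Definition is_hom_on (V : zmodType) (mul : V -> V -> V)
    (W : zmodType) (mulW : W -> W -> W) (R : V -> Prop) (phi : V -> W) : Prop :=
  forall x y, R x -> R y ->
    phi (x + y) = phi x + phi y /\ phi (mul x y) = mulW (phi x) (phi y).

Definition fin_separable (V : zmodType) (mul : V -> V -> V) (R : V -> Prop) : Prop :=
  forall (r : V) (A : V -> Prop), R r -> is_subring mul R A -> ~ A r ->
    exists (F : finZmodType) (mulF : F -> F -> F) (phi : V -> F),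
      is_rng mulF /\ is_hom_on mul mulF R phi /\
      ~ (exists x, A x /\ phi x = phi r).

(* Main.v *)
From HB Require Import structures.
Require Import Defs.
From mathcomp Require Import all_boot all_order all_algebra zify ring lra.
From Stdlib Require Import ClassicalEpsilon FunctionalExtensionality PropExtensionality.
Set Implicit Arguments. Unset Strict Implicit. Unset Printing Implicit Defensive.
Import GRing.Theory Num.Theory.
Local Open Scope ring_scope.

Section Span.
Variable V : zmodType.

Fixpoint spanS (es : seq V) (y : V) : Prop :=
  match es with
  | [::] => y = 0
  | e :: es' => exists c : int, exists y', spanS es' y' /\ y = e *~ c + y'
  end.

Lemma spanS0 es : spanS es 0.
Proof. elim: es => [|e es IH] //=; exists 0, 0; by rewrite mulr0z addr0. Qed.

Lemma spanSB es x y : spanS es x -> spanS es y -> spanS es (x - y).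
Proof.
elim: es x y => [|e es IH] x y /=; first by move=> -> ->; rewrite subr0.
move=> [c [x' [Hx ->]]] [d [y' [Hy ->]]]; exists (c - d), (x' - y'); split; first exact: IH.
by rewrite mulrzBr opprD addrACA.
Qed.

Lemma spanSN es x : spanS es x -> spanS es (- x).
Proof. by move=> Hx; rewrite -sub0r; apply: spanSB => //; apply: spanS0. Qed.

Lemma spanSD es x y : spanS es x -> spanS es y -> spanS es (x + y).
Proof. by move=> Hx Hy; rewrite -[y]opprK; apply: spanSB => //; apply: spanSN. Qed.

Lemma spanSz es x k : spanS es x -> spanS es (x *~ k).
Proof.
move=> Hx; elim/int_rec: k => [|n IH|n IH]; first by rewrite mulr0z; apply: spanS0.
  by rewrite intS mulrzDr mulr1z; apply: spanSD.
by rewrite intS opprD mulrzDr mulrN1z; apply: spanSD => //; apply: spanSN.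
Qed.

Lemma spanSn es x k : spanS es x -> spanS es (x *+ k).
Proof. by move=> Hx; rewrite -mulrz_nat; apply: spanSz. Qed.

Lemma spanS_cons es e y : spanS es y -> spanS (e :: es) y.
Proof. by move=> Hy; exists 0, y; rewrite mulr0z add0r. Qed.

Lemma spanS_nth es i : (i < size es)%N -> spanS es (es`_i).
Proof.
elim: es i => [|e es IH] [|i] //= Hi.
  by exists 1, 0; rewrite mulr1z addr0; split => //; apply: spanS0.
by apply: spanS_cons; apply: IH.
Qed.

Lemma spanS_sum es (I : Type) (r : seq I) (P : pred I) (F : I -> V) :
  (forall i, P i -> spanS es (F i)) -> spanS es (\sum_(i <- r | P i) F i).
Proof.
move=> HF; elim/big_rec: _ => [|i y Pi Hy]; first exact: spanS0.
by apply: spanSD => //; apply: HF.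
Qed.

Lemma sub_zmod (H : V -> Prop) : H 0 -> (forall x y, H x -> H y -> H (x - y)) ->
  forall x k, H x -> H (x *~ k).
Proof.
move=> H0 HB.
have HN : forall x, H x -> H (- x) by move=> x Dx; rewrite -sub0r; apply: HB.
have HD : forall x y, H x -> H y -> H (x + y) by move=> x y Dx Dy; rewrite -[y]opprK; apply: HB => //; apply: HN.
move=> x k Hx; elim/int_rec: k => [|n IH|n IH]; first by rewrite mulr0z.
  by rewrite intS mulrzDr mulr1z; apply: HD.
by rewrite intS opprD mulrzDr mulrN1z; apply: HD => //; apply: HN.
Qed.

Lemma int_subgroup (D : int -> Prop) : D 0 -> (forall x y, D x -> D y -> D (x - y)) ->
  exists d : nat, forall c, D c <-> (d%:Z %| c)%Z.
Proof.
move=> D0 DB.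
have DN : forall x, D x -> D (- x) by move=> x Dx; rewrite -sub0r; apply: DB.
have DD : forall x y, D x -> D y -> D (x + y) by move=> x y Dx Dy; rewrite -[y]opprK; apply: DB => //; apply: DN.
have DM : forall x (k : int), D x -> D (k * x).
  move=> x k Dx; elim/int_rec: k => [|n IH|n IH]; first by rewrite mul0r.
    by rewrite intS mulrDl mul1r; apply: DD.
  by rewrite intS opprD mulrDl mulN1r; apply: DD => //; apply: DN.
case: (classic (exists n : nat, (0 < n)%N /\ D n%:Z)) => [ex|nex]; last first.
  exists 0%N => c; rewrite dvd0z; split; last by move/eqP->.
  move=> Dc; case: (boolP (c == 0)) => // cn0; exfalso; apply: nex; exists `|c|%N; split; first by rewrite absz_gt0.
  by rewrite abszE; case: (ger0P c) => _ //; apply: DN.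
pose P := fun n : nat => (0 < n)%N && (if excluded_middle_informative (D n%:Z) then true else false).
have exP : exists n, P n.
  case: ex => n [n0 Dn]; exists n; rewrite /P n0 /=; by case: excluded_middle_informative.
case: (ex_minnP exP) => d Pd mind.
move: Pd; rewrite /P => /andP [d0]; case: excluded_middle_informative => // Dd _.
exists d => c; split; last first.
  by case/dvdzP => q ->; apply: DM.
move=> Dc; have e := divz_eq c d%:Z.
have Dr : D (c %% d%:Z)%Z.
  have -> : (c %% d%:Z)%Z = c - (c %/ d%:Z)%Z * d%:Z by rewrite {2}e addrC addKr.
  by apply: DB => //; apply: DM.
have r0 : (0 <= (c %% d%:Z))%Z by apply: modz_ge0; lia.
have rd : ((c %% d%:Z) < d%:Z)%Z.
  by apply: ltz_pmod; lia.
case: (boolP ((c %% d%:Z)%Z == 0)) => [/eqP r00|rn0].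
  by apply/dvdzP; exists (c %/ d%:Z)%Z; rewrite {1}e r00 addr0.
exfalso.
have : (d <= `|(c %% d%:Z)%Z|)%N.
  apply: mind; rewrite /P absz_gt0 rn0 /=; case: excluded_middle_informative => //.
  by rewrite gez0_abs.
lia.
Qed.

Lemma sep es (H : V -> Prop) : H 0 -> (forall x y, H x -> H y -> H (x - y)) ->
  forall x, spanS es x -> ~ H x ->
  exists m : nat, (0 < m)%N /\ forall h y, H h -> spanS es y -> x <> h + y *~ m%:Z.
Proof.
move=> H0 HB; have Hz := sub_zmod H0 HB.
have HN : forall x, H x -> H (- x) by move=> x Dx; rewrite -sub0r; apply: HB.
have HD : forall x y, H x -> H y -> H (x + y) by move=> x y Dx Dy; rewrite -[y]opprK; apply: HB => //; apply: HN.
elim: es => [|e0 es IH] x /=; first by move=> ->.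
move=> [c0 [x' [Hx' ->]]] nHx.
pose D := fun c => exists y', spanS es y' /\ H (e0 *~ c + y').
have D0 : D 0 by exists 0; split; [apply: spanS0 | rewrite mulr0z addr0].
have DB : forall a b, D a -> D b -> D (a - b).
  move=> a b [ya [Hya Ha]] [yb [Hyb Hb]]; exists (ya - yb); split; first exact: spanSB.
  by have := HB _ _ Ha Hb; rewrite mulrzBr opprD addrACA.
have [d Dd] := int_subgroup D0 DB.
have key : forall (m : int) h w0 y', spanS es y' ->
    e0 *~ c0 + x' = h + (e0 *~ w0 + y') *~ m ->
    h = e0 *~ (c0 - m * w0) + (x' - y' *~ m).
  move=> m h w0 y' Hy' E.
  have -> : h = e0 *~ c0 + x' - (e0 *~ w0 + y') *~ m by rewrite E addrK.
  by rewrite mulrzDl -mulrzA mulrC mulrzBr opprD addrACA.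
have keyD : forall (m : int) h w0 y', H h -> spanS es y' ->
    e0 *~ c0 + x' = h + (e0 *~ w0 + y') *~ m -> D (c0 - m * w0).
  move=> m h w0 y' Hh Hy' E; exists (x' - y' *~ m); split.
    by apply: spanSB => //; apply: spanSz.
  by rewrite -(key _ _ _ _ Hy' E).
case: (boolP (d%:Z %| c0)%Z) => dc0; last first.
  exists (if d == 0%N then (`|c0|).+1 else d); split; first by case: ifP => //; rewrite lt0n => ->.
  move=> h y Hh [w0 [y' [Hy' ->]]] E.
  have /Dd := keyD _ _ _ _ Hh Hy' E.
  case: eqP => [d0|/eqP dn0].
    rewrite d0 dvd0z => /eqP e; move: dc0; rewrite d0 dvd0z => /eqP; apply.
    have e2 : (c0 - (`|c0|.+1)%:Z * w0 = 0 :> int) := e. clear -e2. have : w0 = 0 by nia. move=> w00; move: e2; rewrite w00; lia.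
  move=> /dvdzP [q Eq]; move: dc0 => /negP; apply; apply/dvdzP; exists (q + w0).
  by rewrite mulrDl -Eq (mulrC w0) subrK.
case/dvdzP: dc0 => t Ec0.
have [l' [Hl' Hls]] : D d%:Z by apply/Dd.
set ls := e0 *~ d%:Z + l' in Hls.
pose v := x' - l' *~ t.
have Hv : spanS es v by apply: spanSB => //; apply: spanSz.
have nHv : ~ H v.
  move=> Hv'; apply: nHx.
  have -> : e0 *~ c0 + x' = v + ls *~ t.
    rewrite /v /ls Ec0 mulrC mulrzA mulrzDl addrCA subrK //.
  by apply: HD => //; apply: Hz.
have [m' [m'0 Hsep]] := IH v Hv nHv.
pose D' := maxn 1 d.
exists (m' * D')%N; split; first by rewrite muln_gt0 m'0 /D' leq_max.
move=> h y Hh [w0 [y' [Hy' ->]]] E.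
have dc : (d%:Z %| c0 - (m' * D')%:Z * w0)%Z by apply/Dd; apply: keyD E.
have Eh := key _ _ _ _ Hy' E.
have Hw : w0 * (d%:Z - D'%:Z) = 0.
  case: (posnP d) => [d0|dpos].
    move: dc; rewrite d0 dvd0z Ec0 d0 /D' => /eqP; nia.
  by rewrite /D' (maxn_idPr dpos) subrr mulr0.
apply: (Hsep (h - ls *~ (t - m'%:Z * w0)) (y' *~ D'%:Z - l' *~ w0)).
- by apply: HB => //; apply: Hz.
- by apply: spanSB; apply: spanSz.
rewrite Eh /ls mulrzBl -!mulrzA mulrzDl -mulrzA opprD [(_ + _) + (- _ - _)]addrACA -mulrzBr.
have -> : c0 - (m' * D')%:Z * w0 - d%:Z * (t - m'%:Z * w0) = 0.
  rewrite Ec0 PoszM; move: Hw; nia.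
rewrite mulr0z add0r (mulrC D'%:Z) -PoszM addrACA subrK -opprD -mulrzDr.
by rewrite /v; congr (_ - l' *~ _); ring.
Qed.
End Span.

Section Addf.
Variables (V W : zmodType) (f : V -> W).
Hypothesis fD : forall x y, f (x + y) = f x + f y.
Lemma af0 : f 0 = 0.
Proof. have := fD 0 0; rewrite addr0 => e; apply: (@addrI _ (f 0)); by rewrite -e addr0. Qed.
Lemma afN x : f (- x) = - f x.
Proof. by apply: (@addrI _ (f x)); rewrite -fD !subrr af0. Qed.
Lemma afB x y : f (x - y) = f x - f y.
Proof. by rewrite fD afN. Qed.
Lemma afn x n : f (x *+ n) = f x *+ n.
Proof. by elim: n => [|n IH]; rewrite ?mulr0n ?af0 // !mulrS fD IH. Qed.
Lemma afz x k : f (x *~ k) = f x *~ k.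
Proof. case: k => n; rewrite ?NegzE ?mulrNz ?afN -?pmulrn ?afn //. Qed.
Lemma afsum (I : Type) (r : seq I) (P : pred I) (F : I -> V) :
  f (\sum_(i <- r | P i) F i) = \sum_(i <- r | P i) f (F i).
Proof. by elim/big_rec2: _ => [|i y1 y2 Pi <-]; rewrite ?af0 // fD. Qed.
End Addf.

Lemma reduce_gen (V : zmodType) (m : nat) (m0 : (0 < m)%N) (es : seq V) y : spanS es y ->
  exists g : nat -> nat, (forall i, g i < m)%N /\
    exists w, spanS es w /\ \sum_(i < size es) es`_i *+ g i - y = w *+ m.
Proof.
elim: es y => [|e0 es IH] y /=.
  move=> ->; exists (fun _ => 0%N); split => //; exists 0; split => //.
  by rewrite big_ord0 subrr mul0rn.
move=> [c0 [y' [Hy' ->]]].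
have [g [Hg [w [Hw Ew]]]] := IH y' Hy'.
pose r := `|(c0 %% m%:Z)%Z|%N.
exists (fun i => if i is j.+1 then g j else r); split.
  case=> [|j] //; rewrite /r; have : ((c0 %% m%:Z)%Z < m%:Z)%R by apply: ltz_pmod; lia.
  have : (0 <= (c0 %% m%:Z)%Z)%R by apply: modz_ge0; lia.
  lia.
exists (w - e0 *~ (c0 %/ m%:Z)%Z); split.
  by exists (- (c0 %/ m%:Z)%Z), w; rewrite mulrNz addrC.
rewrite big_ord_recl /=.
have -> : \sum_(i < size es) (e0 :: es)`_(lift ord0 i) *+ (if (lift ord0 i : nat) is j.+1 then g j else r)
        = \sum_(i < size es) es`_i *+ g i by apply: eq_bigr => i _.
have Er : (r%:Z = c0 - (c0 %/ m%:Z)%Z * m%:Z)%R.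
  rewrite /r gez0_abs; last by apply: modz_ge0; lia.
  by rewrite {2}(divz_eq c0 m%:Z) addrC addKr.
rewrite [e0 *+ r]pmulrn Er mulrzBr opprD addrACA Ew mulrnBl [e0 *~ c0 - _ - _]addrAC subrr sub0r addrC mulrzA -pmulrn.
done. Qed.

Section Quot.
Variables (V : zmodType) (mul : V -> V -> V) (es : seq V) (m : nat).
Hypothesis mulA : associative mul.
Hypothesis mulDl : left_distributive mul +%R.
Hypothesis mulDr : right_distributive mul +%R.
Hypothesis Smul : forall x y, spanS es x -> spanS es y -> spanS es (mul x y).
Hypothesis m0 : (0 < m)%N.

Local Notation S := (spanS es).
Definition Nm z := exists w, S w /\ z = w *+ m.
Definition eqv y z := Nm (y - z).

Lemma eqv_refl y : eqv y y.
Proof. by exists 0; rewrite subrr mul0rn; split => //; apply: spanS0. Qed.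

Lemma eqv_sym y z : eqv y z -> eqv z y.
Proof. by move=> [w [Hw E]]; exists (- w); rewrite mulNrn -E opprB; split => //; apply: spanSN. Qed.

Lemma eqv_trans y z u : eqv y z -> eqv z u -> eqv y u.
Proof.
move=> [w [Hw E]] [w' [Hw' E']]; exists (w + w'); split; first exact: spanSD.
by rewrite mulrnDl -E -E' addrA subrK.
Qed.

Lemma eqv_add a b c d : eqv a b -> eqv c d -> eqv (a + c) (b + d).
Proof.
move=> [w [Hw E]] [w' [Hw' E']]; exists (w + w'); split; first exact: spanSD.
by rewrite mulrnDl -E -E' opprD addrACA.
Qed.

Lemma eqv_opp a b : eqv a b -> eqv (- a) (- b).
Proof. by move=> [w [Hw E]]; exists (- w); rewrite mulNrn -E opprB opprK addrC; split => //; apply: spanSN. Qed.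

Lemma eqv_mul a b c d : S b -> S c -> eqv a b -> eqv c d -> eqv (mul a c) (mul b d).
Proof.
move=> Sb Sc [w [Hw E]] [w' [Hw' E']]; exists (mul w c + mul b w'); split.
  by apply: spanSD; apply: Smul.
have -> : mul a c - mul b d = (mul a c - mul b c) + (mul b c - mul b d) by rewrite addrA subrK.
rewrite -(afB (fun x y => mulDl x y c)) -(afB (mulDr b)) E E'.
by rewrite (afn (fun x y => mulDl x y c)) (afn (mulDr b)) mulrnDl.
Qed.

Definition X := {ffun 'I_(size es) -> 'I_m}.
Definition enc (c : X) : V := \sum_(i < size es) es`_i *+ c i.

Lemma S_enc c : S (enc c).
Proof. by apply: spanS_sum => i _; apply: spanSn; apply: spanS_nth. Qed.

Lemma reduce y : S y -> exists c : X, eqv (enc c) y.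
Proof.
move=> Sy; have [g [Hg [w [Hw Ew]]]] := reduce_gen m0 Sy.
exists [ffun i : 'I_(size es) => Ordinal (Hg i)]; exists w; split => //.
by rewrite -Ew /enc; congr (_ - _); apply: eq_bigr => i _; rewrite ffunE.
Qed.

Definition x0 : X := [ffun _ => Ordinal m0].
Definition code y : X := epsilon (inhabits x0) (fun c => eqv (enc c) y).

Lemma code_spec y : S y -> eqv (enc (code y)) y.
Proof. by move=> Sy; rewrite /code; apply: (epsilon_spec (inhabits x0) (fun c => eqv (enc c) y)); apply: reduce. Qed.

Lemma code_eq y z : eqv y z -> code y = code z.
Proof.
move=> Eyz; rewrite /code; congr (epsilon _).
apply: functional_extensionality => c; apply: propositional_extensionality; split => h.
  exact: eqv_trans h Eyz.
exact: eqv_trans h (eqv_sym Eyz).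
Qed.

Lemma code_idem y : S y -> code (enc (code y)) = code y.
Proof. by move=> Sy; apply: code_eq; apply: code_spec. Qed.

Definition F := {c : X | code (enc c) == c}.
HB.instance Definition _ := Finite.copy F {c : X | code (enc c) == c}.

Definition u0 : F := exist _ (code 0) (introT eqP (code_idem (spanS0 es))).
Definition inF y : F := insubd u0 (code y).
Definition vF (u : F) : V := enc (val u).

Lemma val_inF y : S y -> val (inF y) = code y.
Proof. by move=> Sy; rewrite /inF val_insubd code_idem ?eqxx. Qed.

Lemma S_vF u : S (vF u).
Proof. exact: S_enc. Qed.

Lemma eqv_inF y : S y -> eqv (vF (inF y)) y.
Proof. by move=> Sy; rewrite /vF val_inF //; apply: code_spec. Qed.

Lemma inF_eq y z : S y -> S z -> eqv y z -> inF y = inF z.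
Proof. by move=> Sy Sz E; apply: val_inj; rewrite !val_inF //; apply: code_eq. Qed.

Lemma inF_eqv y z : S y -> S z -> inF y = inF z -> eqv y z.
Proof.
move=> Sy Sz E; apply: eqv_trans (eqv_sym (eqv_inF Sy)) _.
by rewrite E; apply: eqv_inF.
Qed.

Lemma vFK u : inF (vF u) = u.
Proof. by apply: val_inj; rewrite val_inF; [apply/eqP; exact: (valP u) | exact: S_vF]. Qed.

Definition zeroF : F := inF 0.
Definition oppF (u : F) : F := inF (- vF u).
Definition addF (u v : F) : F := inF (vF u + vF v).
Definition mulF (u v : F) : F := inF (mul (vF u) (vF v)).

Lemma SD x y : S x -> S y -> S (x + y). Proof. exact: spanSD. Qed.
Lemma SN x : S x -> S (- x). Proof. exact: spanSN. Qed.

Ltac solveS := repeat first [ apply: SD | apply: SN | apply: Smul | apply: S_vF | apply: spanS0 ].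

Lemma addFA : associative addF.
Proof.
move=> u v w; rewrite /addF; apply: inF_eq; solveS.
apply: eqv_trans (eqv_add (eqv_refl _) (eqv_inF _)) _; first by solveS.
rewrite addrA; apply: eqv_sym; apply: eqv_add (eqv_inF _) (eqv_refl _); solveS.
Qed.

Lemma addFC : commutative addF.
Proof. by move=> u v; rewrite /addF addrC. Qed.

Lemma add0F : left_id zeroF addF.
Proof.
move=> u; rewrite /addF -{2}(vFK u); apply: inF_eq; solveS.
rewrite -{2}(add0r (vF u)); apply: eqv_add (eqv_inF _) (eqv_refl _); solveS.
Qed.

Lemma addNF : left_inverse zeroF oppF addF.
Proof.
move=> u; rewrite /addF /zeroF; apply: inF_eq; solveS.
rewrite -(addNr (vF u)); apply: eqv_add (eqv_inF _) (eqv_refl _); solveS.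
Qed.

HB.instance Definition _ := GRing.isZmodule.Build F addFA addFC add0F addNF.

Lemma mulFA : associative mulF.
Proof.
move=> u v w; rewrite /mulF; apply: inF_eq; solveS.
apply: eqv_trans (eqv_mul _ _ (eqv_refl _) (eqv_inF _)) _; solveS.
rewrite mulA; apply: eqv_sym; apply: eqv_mul (eqv_inF _) (eqv_refl _); solveS.
Qed.

Lemma mulFDl : left_distributive mulF (@GRing.add F).
Proof.
move=> u v w; rewrite [in LHS]/GRing.add /= /addF /mulF; apply: inF_eq; solveS.
apply: eqv_trans (eqv_mul _ _ (eqv_inF _) (eqv_refl _)) _; solveS.
rewrite mulDl; apply: eqv_sym; apply: eqv_add (eqv_inF _) (eqv_inF _); solveS.
Qed.

Lemma mulFDr : right_distributive mulF (@GRing.add F).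
Proof.
move=> u v w; rewrite [in LHS]/GRing.add /= /addF /mulF; apply: inF_eq; solveS.
apply: eqv_trans (eqv_mul _ _ (eqv_refl _) (eqv_inF _)) _; solveS.
rewrite mulDr; apply: eqv_sym; apply: eqv_add (eqv_inF _) (eqv_inF _); solveS.
Qed.

Lemma inF_add x y : S x -> S y -> inF (x + y) = inF x + inF y.
Proof.
move=> Sx Sy; rewrite {2}/GRing.add /= /addF; apply: inF_eq; solveS => //.
apply: eqv_sym; apply: eqv_add; apply: eqv_inF => //.
Qed.

Lemma inF_mul x y : S x -> S y -> inF (mul x y) = mulF (inF x) (inF y).
Proof.
move=> Sx Sy; rewrite /mulF; apply: inF_eq; solveS => //.
apply: eqv_sym; apply: eqv_mul => //; solveS; apply: eqv_inF => //.
Qed.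

End Quot.

Lemma span_map (V : zmodType) (f : V -> V) (fD : forall x y, f (x + y) = f x + f y)
  (es es' : seq V) : (forall i, (i < size es)%N -> spanS es' (f es`_i)) ->
  forall y, spanS es y -> spanS es' (f y).
Proof.
elim: es => [|e es IH] /= He y.
  by move=> ->; rewrite (af0 fD); apply: spanS0.
move=> [c [y' [Hy' ->]]]; rewrite fD (afz fD); apply: spanSD.
  by apply: spanSz; apply: (He 0%N).
by apply: IH => // i Hi; apply: (He i.+1).
Qed.

Section Pow.
Variables (K : zmodType) (mul : K -> K -> K) (a : K).
Hypothesis mulA : associative mul.
Hypothesis mulDl : left_distributive mul +%R.
Hypothesis mulDr : right_distributive mul +%R.
Variables (n : nat) (c : nat -> int).
Hypothesis n0 : (0 < n)%N.
Hypothesis rel : rpow mul a n.-1 = - \sum_(1 <= i < n) rpow mul a i.-1 *~ c i.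

Definition pes := [seq rpow mul a i | i <- iota 0 n].
Lemma size_pes : size pes = n. Proof. by rewrite size_map size_iota. Qed.
Lemma pes_nth i : (i < n)%N -> pes`_i = rpow mul a i.
Proof. by move=> Hi; rewrite (nth_map 0%N) ?size_iota // nth_iota. Qed.
Lemma gen_S i : (i < n)%N -> spanS pes (rpow mul a i).
Proof. by move=> Hi; rewrite -pes_nth //; apply: spanS_nth; rewrite size_pes. Qed.

Lemma Sa y : spanS pes y -> spanS pes (mul a y).
Proof.
apply: (span_map (mulDr a)) => i; rewrite size_pes => Hi; rewrite pes_nth //.
case: (ltnP i.+1 n) => [Hi'|Hi']; first exact: (gen_S Hi').
have -> : i = n.-1 by lia.
rewrite rel (afN (mulDr a)) (afsum (mulDr a)); apply: spanSN.
rewrite big_seq; apply: spanS_sum => j; rewrite mem_index_iota => /andP [j1 jn].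
rewrite (afz (mulDr a)); apply: spanSz.
have -> : mul a (rpow mul a j.-1) = rpow mul a j.-1.+1 by [].
by rewrite prednK //; apply: gen_S.
Qed.

Lemma pow_S j : spanS pes (rpow mul a j).
Proof. elim: j => [|j IH]; first exact: gen_S. exact: Sa IH. Qed.

Lemma Smul x y : spanS pes x -> spanS pes y -> spanS pes (mul x y).
Proof.
move=> Sx Sy.
have H : forall i, spanS pes (mul (rpow mul a i) y).
  elim=> [|i IH]; first exact: Sa.
  have -> : rpow mul a i.+1 = mul a (rpow mul a i) by [].
  by rewrite -mulA; apply: Sa.
by apply: (span_map (f := fun x => mul x y) (fun x1 x2 => mulDl x1 x2 y)) Sx => i; rewrite size_pes => Hi; rewrite /= pes_nth.
Qed.

End Pow.

Lemma Zmono_S (K : zmodType) (mul : K -> K -> K) (a : K) (n : nat) y :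
  (forall j, spanS (pes mul a n) (rpow mul a j)) -> Zmono mul a y -> spanS (pes mul a n) y.
Proof.
move=> Hp [g [_ ->]]; rewrite /peval; apply: spanS_sum => i _; apply: spanSz; exact: Hp.
Qed.

Theorem lemma6 (K : zmodType) (mulK : K -> K -> K) (HK : is_rng mulK)
    (a : K) (Ha : int_algebraic mulK a) :
  fin_separable mulK (Zmono mulK a).
Proof.
case: HK => [mulA [mulDl mulDr]].
case: Ha => f [fm [f0 fa]].
pose n := (size f).-1.
have sf : size f = n.+1.
  by rewrite /n prednK // lt0n size_poly_eq0 monic_neq0.
have n0 : (0 < n)%N.
  rewrite lt0n; apply/eqP => n00; move: fm; rewrite monicE lead_coefE sf n00 /= f0.
  by rewrite eq_sym oner_eq0.
have rel : rpow mulK a n.-1 = - \sum_(1 <= i < n) rpow mulK a i.-1 *~ f`_i.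
  move: fa; rewrite /peval sf big_nat_recr //=.
  have -> : f`_n = 1 by move: fm; rewrite monicE lead_coefE sf => /eqP.
  rewrite mulr1z addrC => /eqP; rewrite addr_eq0 => /eqP //.
pose es := pes mulK a n.
have Hp : forall j, spanS es (rpow mulK a j) := pow_S mulDr n0 rel.
have SM : forall x y, spanS es x -> spanS es y -> spanS es (mulK x y) := Smul mulA mulDl mulDr n0 rel.
have RS : forall y, Zmono mulK a y -> spanS es y by move=> y; apply: Zmono_S.
move=> r A Rr [AR [A0 [AB AM]]] nAr.
have [m [m0 Hsep]] := sep A0 AB (RS r Rr) nAr.
exists (F es m0), (@mulF _ mulK es m m0), (inF es m0); split; last split.
- by split; [apply: mulFA | split; [apply: mulFDl | apply: mulFDr]].
- move=> x y Rx Ry; split; first by apply: inF_add; apply: RS.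
  by apply: inF_mul => //; apply: RS.
- move=> [x [Ax E]].
  have [w [Sw Ew]] := inF_eqv (RS _ (AR _ Ax)) (RS _ Rr) E.
  apply: (Hsep x (- w) Ax (spanSN Sw)).
  by rewrite mulNrz -pmulrn -Ew opprB addrC subrK.
Qed.
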